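(* Let $\mathcal{X}\subset\mathbb{R}^2$ and let $\mathbf{f}=(f_1,\ldots,f_p)^\top:\mathcal{X}\to\mathbb{R}^p$ have linearly independent component functions (regression model $\mu(\mathbf{x})=\mathbf{f}^\top(\mathbf{x})\boldsymbol\theta$). Let $t:\mathcal{X}\to\mathbb{R}$ be a function with range $\mathcal{T}$, and for $t\in\mathcal{T}$ let $\widetilde{\mathcal{X}}(t)=\{\mathbf{x}\in\mathcal{X}:t(\mathbf{x})=t\}$ and let $\widetilde{\mathbf{f}}_t=(\widetilde f_{1t},\ldots,\widetilde f_{p_t,t})^\top:\widetilde{\mathcal{X}}(t)\to\mathbb{R}^{p_t}$ be a vector of functions that are linearly independent on $\widetilde{\mathcal{X}}(t)$ and span the same linear space as the restrictions of $f_1,\ldots,f_p$ to $\widetilde{\mathcal{X}}(t)$ (the conditional model given $t$). If a design $\xi$ on $\mathcal{X}$ is admissible in the class of all designs on $\mathcal{X}$ for the model with regression vector $\mathbf{f}$, then for every $t\in\mathcal{T}$ with $\xi_t(t)>0$ the conditional design $\xi_{\mathbf{x}|t}$ is admissible in the class $\Xi_t$ of all designs on $\widetilde{\mathcal{X}}(t)$ for the conditional model with regression vector $\widetilde{\mathbf{f}}_t$.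
   Context: A design on a set $S$ is a probability measure on $S$ with finite support. For the model with regression vector $\mathbf{f}$ on $\mathcal{X}$, the information matrix of $\xi$ is $\mathbf{M}(\xi)=\int\mathbf{f}\mathbf{f}^\top d\xi$; $\xi_1$ is admissible if there is no design $\xi_2$ on $\mathcal{X}$ with $\mathbf{M}(\xi_2)\neq\mathbf{M}(\xi_1)$ and $\mathbf{M}(\xi_2)-\mathbf{M}(\xi_1)$ nonnegative definite. Analogously, for the conditional model the information matrix of a design $\eta$ on $\widetilde{\mathcal{X}}(t)$ is $\mathbf{M}_t(\eta)=\int_{\widetilde{\mathcal{X}}(t)}\widetilde{\mathbf{f}}_t\widetilde{\mathbf{f}}_t^\top d\eta$, and admissibility in $\Xi_t$ is defined in the same way with $\mathbf{M}_t$ in place of $\mathbf{M}$. For a design $\xi$ on $\mathcal{X}$, $\xi_t(t)=\xi(\widetilde{\mathcal{X}}(t))$, and if $\xi_t(t)>0$ the conditional design is the probability measure $\xi_{\mathbf{x}|t}(A)=\xi(A\cap\widetilde{\mathcal{X}}(t))/\xi_t(t)$ on $\widetilde{\mathcal{X}}(t)$. *)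

(* Defs.v *)
From mathcomp Require Import all_boot all_order all_algebra.
Set Implicit Arguments. Unset Strict Implicit. Unset Printing Implicit Defensive.
Import Order.TTheory GRing.Theory Num.Theory.
Local Open Scope ring_scope.

Section Designs.
Variable R : realFieldType.
Local Notation pt := (R * R)%type.

(* A design on S: a probability measure with finite support, given by its
   (duplicate-free) support s and weights w, positive on s, summing to 1. *)
Definition is_design (S : pt -> Prop) (s : seq pt) (w : pt -> R) : Prop :=
  [/\ uniq s, (forall x, x \in s -> S x /\ 0 < w x) & \sum_(x <- s) w x = 1].

Definition info_mx (p : nat) (f : pt -> 'cV[R]_p) (s : seq pt) (w : pt -> R)
  : 'M[R]_p := \sum_(x <- s) w x *: (f x *m (f x)^T).

Definition nnd (p : nat) (A : 'M[R]_p) : Prop :=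
  forall v : 'cV[R]_p, 0 <= ((v^T *m A *m v) 0 0).

Definition admissible (S : pt -> Prop) (p : nat) (f : pt -> 'cV[R]_p)
  (s : seq pt) (w : pt -> R) : Prop :=
  is_design S s w /\
  ~ (exists (s2 : seq pt) (w2 : pt -> R), is_design S s2 w2 /\
       info_mx f s2 w2 != info_mx f s w /\ nnd (info_mx f s2 w2 - info_mx f s w)).

Definition lin_indep_on (S : pt -> Prop) (p : nat) (f : pt -> 'cV[R]_p) : Prop :=
  forall c : 'rV[R]_p, (forall x, S x -> c *m f x = 0) -> c = 0.

Definition same_span (S : pt -> Prop) (p q : nat)
  (f : pt -> 'cV[R]_p) (g : pt -> 'cV[R]_q) : Prop :=
  (exists A : 'M[R]_(p, q), forall x, S x -> f x = A *m g x) /\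
  (exists B : 'M[R]_(q, p), forall x, S x -> g x = B *m f x).

Definition level_set (X : pt -> Prop) (t : pt -> R) (t0 : R) : pt -> Prop :=
  fun x => X x /\ t x = t0.

Definition range_on (X : pt -> Prop) (t : pt -> R) (t0 : R) : Prop :=
  exists2 x, X x & t x = t0.

Definition marg_t (s : seq pt) (w : pt -> R) (t : pt -> R) (t0 : R) : R :=
  \sum_(x <- s | t x == t0) w x.

Definition cond_supp (s : seq pt) (t : pt -> R) (t0 : R) : seq pt :=
  [seq x <- s | t x == t0].
Definition cond_w (s : seq pt) (w : pt -> R) (t : pt -> R) (t0 : R) : pt -> R :=
  fun x => w x / marg_t s w t t0.

End Designs.

(* Main.v *)
Require Import Defs.
From mathcomp Require Import all_boot all_order all_algebra.
Set Implicit Arguments. Unset Strict Implicit. Unset Printing Implicit Defensive.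
Import Order.TTheory GRing.Theory Num.Theory.
Local Open Scope ring_scope.

Section Helpers.
Variable R : realFieldType.

Lemma info_span (p q : nat) (f : R * R -> 'cV[R]_p) (g : R * R -> 'cV[R]_q)
  (A : 'M[R]_(p, q)) (s0 : seq (R * R)) (w : R * R -> R) :
  (forall x, x \in s0 -> f x = A *m g x) ->
  info_mx f s0 w = A *m info_mx g s0 w *m A^T.
Proof.
move=> H; rewrite /info_mx mulmx_sumr mulmx_suml big_seq [RHS]big_seq.
apply: eq_bigr => x hx; rewrite (H x hx) trmx_mul !(scalemxAl, scalemxAr) !mulmxA.
by rewrite -scalemxAr -scalemxAl.
Qed.

End Helpers.

Theorem theorem3 (R : realFieldType) (X : R * R -> Prop) (p : nat)
  (f : R * R -> 'cV[R]_p) (t : R * R -> R)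
  (pt : R -> nat) (ft : forall t0 : R, R * R -> 'cV[R]_(pt t0)) :
  lin_indep_on X f ->
  (forall t0, range_on X t t0 ->
     lin_indep_on (level_set X t t0) (ft t0) /\
     same_span (level_set X t t0) f (ft t0)) ->
  forall (s : seq (R * R)) (w : R * R -> R),
    admissible X f s w ->
    forall t0, range_on X t t0 -> 0 < marg_t s w t t0 ->
      admissible (level_set X t t0) (ft t0) (cond_supp s t t0) (cond_w s w t t0).
Proof.
move=> _ Hft s w [[us Hs sw1] Hadm] t0 rt0 mpos.
have [_ [[A HA] [B HB]]] := Hft t0 rt0.
set m := marg_t s w t t0.
have m0 : m != 0 by rewrite gt_eqF.
have Lcs : forall x, x \in cond_supp s t t0 -> level_set X t t0 x.
  move=> x; rewrite mem_filter => /andP[/eqP h hx]; split => //.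
  by have [] := Hs x hx.
split.
  split.
  - exact: filter_uniq.
  - move=> x hx; split; first exact: Lcs.
    move: hx; rewrite mem_filter => /andP[_ hx].
    have [_ wp] := Hs x hx.
    by rewrite /cond_w divr_gt0.
  - rewrite /cond_supp big_filter /cond_w -mulr_suml.
    by rewrite -/(marg_t s w t t0) -/m mulfV.
move=> [s2 [w2 [[us2 Hs2 sw2] [Hne Hnnd]]]].
apply: Hadm.
pose s' := [seq x <- s | t x != t0] ++ s2.
pose w' := fun x => if t x == t0 then m * w2 x else w x.
have Ls2 : forall x, x \in s2 -> t x = t0.
  by move=> x /Hs2 [[_ ->]].
exists s', w'.
pose Sn := \sum_(x <- s | t x != t0) w x *: (f x *m (f x)^T).
pose Se := \sum_(x <- s | t x == t0) w x *: (f x *m (f x)^T).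
have HM : info_mx f s w = Se + Sn.
  by rewrite /info_mx (bigID (fun x => t x == t0)) /=.
have HSe : Se = m *: info_mx f (cond_supp s t t0) (cond_w s w t t0).
  rewrite /info_mx /cond_supp big_filter scaler_sumr; apply: eq_bigr => x _.
  by rewrite /cond_w scalerA mulrCA mulfV // mulr1.
have HM' : info_mx f s' w' = Sn + m *: info_mx f s2 w2.
  rewrite /info_mx big_cat /= big_filter; congr (_ + _).
    by apply: eq_bigr => x hx; rewrite /w' (negbTE hx).
  rewrite scaler_sumr big_seq [RHS]big_seq; apply: eq_bigr => x hx.
  by rewrite /w' Ls2 // eqxx scalerA.
set I2 := info_mx f s2 w2.
set Ic := info_mx f (cond_supp s t t0) (cond_w s w t t0).
have Hdiff : info_mx f s' w' - info_mx f s w = m *: (I2 - Ic).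
  by rewrite HM' HM [Se + Sn]addrC HSe opprD addrACA subrr add0r scalerBr.
set Mt2 := info_mx (ft t0) s2 w2.
set Mtc := info_mx (ft t0) (cond_supp s t t0) (cond_w s w t t0).
have HDf : I2 - Ic = A *m (Mt2 - Mtc) *m A^T.
  rewrite mulmxBr mulmxBl /I2 /Ic (info_span w2 (A := A) (g := ft t0)).
    rewrite (info_span (cond_w s w t t0) (A := A) (g := ft t0)) //.
    by move=> x /Lcs; apply: HA.
  by move=> x /Hs2 [] /HA.
have HDt : Mt2 - Mtc = B *m (I2 - Ic) *m B^T.
  rewrite mulmxBr mulmxBl /Mt2 /Mtc (info_span w2 (A := B) (g := f)).
    rewrite (info_span (cond_w s w t t0) (A := B) (g := f)) //.
    by move=> x /Lcs; apply: HB.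
  by move=> x /Hs2 [] /HB.
split; last split.
- split.
  + rewrite cat_uniq filter_uniq // us2 andbT /=.
    apply/hasPn => x hx; rewrite mem_filter Ls2 // eqxx.
    by [].
  + move=> x; rewrite mem_cat => /orP[|hx].
      rewrite mem_filter => /andP[hne hx].
      by have [hX hw] := Hs x hx; rewrite /w' (negbTE hne).
    have [[hX ht] hw] := Hs2 x hx; split => //.
    by rewrite /w' ht eqxx mulr_gt0.
  + rewrite big_cat /= big_filter.
    have -> : \sum_(x <- s | t x != t0) w' x = \sum_(x <- s | t x != t0) w x.
      by apply: eq_bigr => x hx; rewrite /w' (negbTE hx).
    have -> : \sum_(x <- s2) w' x = m.
      rewrite big_seq (eq_bigr (fun x => m * w2 x)).
        by rewrite -big_seq -mulr_sumr sw2 mulr1.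
      by move=> x hx; rewrite /w' Ls2 // eqxx.
    by rewrite -sw1 [RHS](bigID (fun x => t x == t0)) /= addrC /m /marg_t.
- rewrite -subr_eq0 Hdiff scaler_eq0 (negbTE m0) /=.
  apply: contra Hne => /eqP H0.
  by rewrite -subr_eq0 HDt H0 mulmx0 mul0mx.
- move=> v; rewrite Hdiff -scalemxAr -scalemxAl mxE mulr_ge0 ?(ltW mpos) //.
  rewrite HDf !mulmxA.
  have := Hnnd (A^T *m v).
  by rewrite trmx_mul trmxK !mulmxA.
Qed.
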